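(* Let $T>0$ and let $\mathbb{T}^2=(\mathbb{R}/T\mathbb{Z})\times(\mathbb{R}/2\pi\mathbb{Z})$ with coordinates $(t,x)$ and volume form $dV=dt\wedge dx$. Assume that $\mathcal{R}=\frac{2\pi}{T}$ has irrationality measure equal to $2$. Let \[ M_1=\begin{pmatrix}0&-1&0&0\\1&0&0&0\\0&0&0&1\\0&0&-1&0\end{pmatrix},\qquad M_2=\begin{pmatrix}0&0&1&0\\0&0&0&-1\\-1&0&0&0\\0&1&0&0\end{pmatrix}. \] Let $\widetilde{Z}:\mathbb{R}\times\mathbb{T}^2\to\mathbb{R}^4$ be a smooth map satisfying \[ \partial_s\widetilde{Z}(s,t,x)+M_1\partial_t\widetilde{Z}(s,t,x)+M_2\partial_x\widetilde{Z}(s,t,x)=0 \] for all $(s,t,x)$, with finite energy \[ E(\widetilde{Z})=\int_{-\infty}^{+\infty}\left(\int_{\mathbb{T}^2}|\partial_s\widetilde{Z}(s,t,x)|^2\,dV\right)ds<+\infty, \] and such that for every $s\in\mathbb{R}$ the map $\widetilde{Z}_s:=\widetilde{Z}(s,\cdot,\cdot)$ has mean zero, i.e. $\int_{\mathbb{T}^2}\widetilde{Z}_s\,dV=0$. Then $\lim_{s\to+\infty}\widetilde{Z}_s=0$ in $C^\infty(\mathbb{T}^2,\mathbb{R}^4)$.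
   Context: The irrationality measure of a real number $r$ is the infimum of all $\rho$ for which there exists a constant $c$ such that $\frac{c}{q^\rho}<|r-\frac{p}{q}|$ for all $\frac{p}{q}\in\mathbb{Q}$. The assumption that $\mathcal{R}$ has irrationality measure $2$ is a standing assumption of the section in which the lemma is stated. *)

(* Defs.v *)
From Stdlib Require Import Reals Lra ZArith.
From Coquelicot Require Import Coquelicot.
Open Scope R_scope.

Definition irr_exponent_ok (r rho : R) : Prop :=
  exists c : R, 0 < c /\
    forall (p : Z) (q : nat), (0 < q)%nat ->
      c / Rpower (INR q) rho < Rabs (r - IZR p / INR q).

Definition has_irrationality_measure (r mu : R) : Prop :=
  (forall rho, irr_exponent_ok r rho -> mu <= rho) /\
  (forall m, (forall rho, irr_exponent_ok r rho -> m <= rho) -> m <= mu).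

Inductive dir := dS | dT | dX.

Definition pD (d : dir) (f : R -> R -> R -> R) : R -> R -> R -> R :=
  match d with
  | dS => fun s t x => Derive (fun u => f u t x) s
  | dT => fun s t x => Derive (fun u => f s u x) t
  | dX => fun s t x => Derive (fun u => f s t u) x
  end.

Definition iterD (l : list dir) (f : R -> R -> R -> R) : R -> R -> R -> R :=
  List.fold_right pD f l.

Definition smooth3 (f : R -> R -> R -> R) : Prop :=
  forall l : list dir,
    (forall s t x,
        continuous (fun p : R * R * R => let '(s', t', x') := p in iterD l f s' t' x')
                   (s, t, x)) /\
    (forall s t x, ex_derive (fun u => iterD l f u t x) s /\
                   ex_derive (fun u => iterD l f s u x) t /\
                   ex_derive (fun u => iterD l f s t u) x).

Definition M1 (i j : nat) : R :=
  match i, j with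
  | 0%nat, 1%nat => -1 | 1%nat, 0%nat => 1 | 2%nat, 3%nat => 1
  | 3%nat, 2%nat => -1 | _, _ => 0
  end.

Definition M2 (i j : nat) : R :=
  match i, j with
  | 0%nat, 2%nat => 1 | 1%nat, 3%nat => -1 | 2%nat, 0%nat => -1
  | 3%nat, 1%nat => 1 | _, _ => 0
  end.

(** Integral over the torus (R/TZ) x (R/2piZ) with dV = dt dx, computed on the
    fundamental domain [0,T] x [0,2pi]. *)
Definition torus_int (T : R) (g : R -> R -> R) : R :=
  RInt (fun t => RInt (fun x => g t x) 0 (2 * PI)) 0 T.

Definition Dtx (a b : nat) (f : R -> R -> R -> R) : R -> R -> R -> R :=
  Nat.iter a (pD dT) (Nat.iter b (pD dX) f).

(* Main.v *)
Require Import Defs.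
From Stdlib Require Import Reals Lra ZArith Lia List.
From Stdlib Require Import ClassicalEpsilon FunctionalExtensionality Classical.
From Coquelicot Require Import Coquelicot.
Open Scope R_scope.

Lemma ballR (x y e : R) : ball x e y <-> Rabs (y - x) < e.
Proof. split; intro H; exact H. Qed.

Definition C3 (f : R -> R -> R -> R) : Prop :=
  forall s t x, continuous (fun p : R * R * R => f (fst (fst p)) (snd (fst p)) (snd p)) (s, t, x).

Lemma C3_eps f : C3 f -> forall s t x (eps : posreal), exists d : posreal,
  forall s' t' x', Rabs (s' - s) < d -> Rabs (t' - t) < d -> Rabs (x' - x) < d ->
  Rabs (f s' t' x' - f s t x) < eps.
Proof.
  intros Hf s t x eps.
  destruct (proj1 (filterlim_locally _ _) (Hf s t x) eps) as [d Hd].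
  exists d. intros s' t' x' H1 H2 H3.
  apply (Hd (s', t', x')). split; [split|]; simpl; assumption.
Qed.

Lemma cont_of_eps (g : R -> R) x :
  (forall eps : posreal, exists d : posreal, forall y, Rabs (y - x) < d -> Rabs (g y - g x) < eps) ->
  continuous g x.
Proof.
  intros H. apply (proj2 (filterlim_locally _ _)). intros eps.
  destruct (H eps) as [d Hd]. exists d. intros y Hy. apply Hd. exact Hy.
Qed.

Lemma C3_plus f g : C3 f -> C3 g -> C3 (fun s t x => f s t x + g s t x).
Proof.
  intros Hf Hg s t x.
  exact (@continuous_plus _ R_AbsRing R_NormedModule _ _ _ (Hf s t x) (Hg s t x)).
Qed.

Lemma C3_mult f g : C3 f -> C3 g -> C3 (fun s t x => f s t x * g s t x).
Proof.
  intros Hf Hg s t x.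
  exact (@continuous_mult _ R_AbsRing _ _ _ (Hf s t x) (Hg s t x)).
Qed.

Lemma C3_const c : C3 (fun _ _ _ => c).
Proof. intros s t x. apply continuous_const. Qed.

Lemma exR_cont (f : R -> R) a b : (forall z, continuous f z) -> ex_RInt f a b.
Proof. intros H. apply (@ex_RInt_continuous R_CompleteNormedModule). intros z _. apply H. Qed.

Lemma posd (d : posreal) : 0 < d. Proof. apply cond_pos. Qed.

Lemma Rabs00 (d : posreal) (a : R) : Rabs (a - a) < d.
Proof. rewrite Rminus_eq_0, Rabs_R0. apply cond_pos. Qed.

Lemma C3_x f s t x : C3 f -> continuous (fun x => f s t x) x.
Proof.
  intros Hf. apply cont_of_eps. intros eps.
  destruct (C3_eps f Hf s t x eps) as [d Hd]. exists d. intros y Hy.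
  apply Hd; auto using Rabs00.
Qed.
Lemma C3_t f s t x : C3 f -> continuous (fun t => f s t x) t.
Proof.
  intros Hf. apply cont_of_eps. intros eps.
  destruct (C3_eps f Hf s t x eps) as [d Hd]. exists d. intros y Hy.
  apply Hd; auto using Rabs00.
Qed.
Lemma C3_s f s t x : C3 f -> continuous (fun s => f s t x) s.
Proof.
  intros Hf. apply cont_of_eps. intros eps.
  destruct (C3_eps f Hf s t x eps) as [d Hd]. exists d. intros y Hy.
  apply Hd; auto using Rabs00.
Qed.
Lemma C3_2d_sx f s t x : C3 f -> continuity_2d_pt (fun u v => f u t v) s x.
Proof.
  intros Hf eps. destruct (C3_eps f Hf s t x eps) as [d Hd]. exists d. intros u v Hu Hv.
  apply Hd; auto using Rabs00.
Qed.
Lemma C3_2d_tx f s t x : C3 f -> continuity_2d_pt (fun u v => f s u v) t x.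
Proof.
  intros Hf eps. destruct (C3_eps f Hf s t x eps) as [d Hd]. exists d. intros u v Hu Hv.
  apply Hd; auto using Rabs00.
Qed.
Lemma C3_2d_st f s t x : C3 f -> continuity_2d_pt (fun u v => f u v x) s t.
Proof.
  intros Hf eps. destruct (C3_eps f Hf s t x eps) as [d Hd]. exists d. intros u v Hu Hv.
  apply Hd; auto using Rabs00.
Qed.
Lemma cont2_1 h u v : continuity_2d_pt h u v -> continuous (fun u => h u v) u.
Proof.
  intros H. apply cont_of_eps. intros eps. destruct (H eps) as [d Hd]. exists d.
  intros y Hy. apply Hd; auto using Rabs00.
Qed.
Lemma cont2_2 h u v : continuity_2d_pt h u v -> continuous (fun v => h u v) v.
Proof.
  intros H. apply cont_of_eps. intros eps. destruct (H eps) as [d Hd]. exists d.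
  intros y Hy. apply Hd; auto using Rabs00.
Qed.

Lemma RInt_param_cont (g : R -> R -> R -> R) a b : a <= b -> C3 g ->
  forall s t, continuity_2d_pt (fun s t => RInt (fun x => g s t x) a b) s t.
Proof.
  intros Hab Hg s t eps.
  assert (He : 0 < eps / (2 * (b - a) + 2)).
  { apply Rdiv_lt_0_compat. apply cond_pos. lra. }
  set (e' := mkposreal _ He).
  assert (Hd : forall x, exists d : posreal, forall s' t' x', Rabs (s' - s) < d -> Rabs (t' - t) < d -> Rabs (x' - x) < d ->
     Rabs (g s' t' x' - g s t x) < e').
  { intros x. apply (C3_eps g Hg). }
  set (delta := fun x => proj1_sig (constructive_indefinite_description _ (Hd x))).
  assert (Hdelta : forall x s' t' x', Rabs (s' - s) < delta x -> Rabs (t' - t) < delta x -> Rabs (x' - x) < delta x ->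
     Rabs (g s' t' x' - g s t x) < e').
  { intros x. unfold delta. destruct (constructive_indefinite_description _ (Hd x)) as [d Hd']. simpl. exact Hd'. }
  destruct (compactness_value_1d a b delta) as [d Hcd].
  exists d. intros u v Hu Hv.
  assert (Hpt : forall x, a <= x <= b -> Rabs (g u v x - g s t x) <= 2 * e').
  { intros x Hx. destruct (Rle_dec (Rabs (g u v x - g s t x)) (2 * e')) as [H|H]; auto.
    exfalso. apply (Hcd x Hx). intros [y [Hy [Hxy Hdy]]].
    assert (H1 : Rabs (g u v x - g s t y) < e') by (apply Hdelta; lra).
    assert (H2 : Rabs (g s t x - g s t y) < e') by (apply Hdelta; try lra; rewrite Rminus_eq_0, Rabs_R0; apply cond_pos).
    apply H. 
    replace (g u v x - g s t x) with ((g u v x - g s t y) - (g s t x - g s t y)) by ring.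
    eapply Rle_trans. apply Rabs_triang. rewrite Rabs_Ropp. lra. }
  assert (Ex1 : ex_RInt (fun x => g u v x) a b).
  { apply exR_cont. intros z. apply C3_x. exact Hg. }
  assert (Ex2 : ex_RInt (fun x => g s t x) a b).
  { apply exR_cont. intros z. apply C3_x. exact Hg. }
  assert (Hm : RInt (fun x => g u v x - g s t x) a b = RInt (fun x => g u v x) a b - RInt (fun x => g s t x) a b).
  { exact (@RInt_minus R_CompleteNormedModule _ _ _ _ Ex1 Ex2). }
  rewrite <- Hm.
  eapply Rle_lt_trans. apply abs_RInt_le_const with (M := 2 * e'); auto.
  exact (@ex_RInt_minus R_NormedModule _ _ _ _ Ex1 Ex2).
  unfold e'; simpl.
  apply Rmult_lt_reg_r with (2 * (b - a) + 2). lra.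
  field_simplify; try lra.
  assert (0 < eps) by apply cond_pos. nra.
Qed.

Definition exD (d : dir) (f : R -> R -> R -> R) : Prop :=
  forall s t x, match d with
  | dS => ex_derive (fun u => f u t x) s
  | dT => ex_derive (fun u => f s u x) t
  | dX => ex_derive (fun u => f s t u) x end.

Definition D1 f := C3 f /\ forall d, exD d f /\ C3 (pD d f).

Lemma param_derive (f : R -> R -> R) a b u0 :
 (forall u x, ex_derive (fun z => f z x) u) ->
 (forall u x, continuity_2d_pt f u x) ->
 (forall u x, continuity_2d_pt (fun u x => Derive (fun z => f z x) u) u x) ->
 is_derive (fun u => RInt (fun x => f u x) a b) u0 (RInt (fun x => Derive (fun z => f z x) u0) a b).
Proof.
  intros H1 H2 H3.
  apply is_derive_RInt_param.
  - apply filter_forall. intros; apply H1.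
  - intros; apply H3.
  - apply filter_forall. intros y. apply exR_cont. intros z. apply cont2_2 with (h := f). apply H2.
Qed.

Lemma inner_derive_s φ t : C3 φ -> exD dS φ -> C3 (pD dS φ) -> forall s0,
  is_derive (fun s => RInt (fun x => φ s t x) 0 (2 * PI)) s0 (RInt (fun x => pD dS φ s0 t x) 0 (2 * PI)).
Proof.
  intros Hc Hd Hc' s0.
  apply (param_derive (fun u x => φ u t x)).
  - intros u x. apply (Hd u t x).
  - intros u x. apply C3_2d_sx. exact Hc.
  - intros u x. apply (C3_2d_sx (pD dS φ)). exact Hc'.
Qed.

Lemma inner_derive_t φ s : C3 φ -> exD dT φ -> C3 (pD dT φ) -> forall t0,
  is_derive (fun t => RInt (fun x => φ s t x) 0 (2 * PI)) t0 (RInt (fun x => pD dT φ s t0 x) 0 (2 * PI)).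
Proof.
  intros Hc Hd Hc' t0.
  apply (param_derive (fun u x => φ s u x)).
  - intros u x. apply (Hd s u x).
  - intros u x. apply C3_2d_tx. exact Hc.
  - intros u x. apply (C3_2d_tx (pD dT φ)). exact Hc'.
Qed.

Lemma PI2_pos : 0 <= 2 * PI.
Proof. pose proof PI_RGT_0. lra. Qed.

Lemma inner_cont2 φ : C3 φ -> forall s t, continuity_2d_pt (fun s t => RInt (fun x => φ s t x) 0 (2 * PI)) s t.
Proof. intros Hc s t. apply RInt_param_cont. apply PI2_pos. exact Hc. Qed.

Lemma torus_derive_s (T : R) φ : 0 <= T -> C3 φ -> exD dS φ -> C3 (pD dS φ) -> forall s0,
  is_derive (fun s => torus_int T (φ s)) s0 (torus_int T (pD dS φ s0)).
Proof.
  intros HT Hc Hd Hc' s0. unfold torus_int.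
  set (h := fun s t => RInt (fun x => φ s t x) 0 (2 * PI)).
  assert (Hh : forall s t, is_derive (fun s => h s t) s (RInt (fun x => pD dS φ s t x) 0 (2 * PI))).
  { intros s t. apply inner_derive_s; auto. }
  assert (HD : forall s t, Derive (fun z => h z t) s = RInt (fun x => pD dS φ s t x) 0 (2 * PI)).
  { intros s t. apply is_derive_unique. apply Hh. }
  assert (E : RInt (fun t => RInt (fun x => pD dS φ s0 t x) 0 (2 * PI)) 0 T
            = RInt (fun t => Derive (fun z => h z t) s0) 0 T).
  { apply RInt_ext. intros. rewrite HD. reflexivity. }
  rewrite E.
  apply (is_derive_RInt_param h 0 T s0).
  - apply filter_forall. intros y t _. eexists. apply Hh.
  - intros t _. apply continuity_2d_pt_ext with (f := fun u v => RInt (fun x => pD dS φ u v x) 0 (2 * PI)).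
    + intros; rewrite HD; reflexivity.
    + apply inner_cont2. exact Hc'.
  - apply filter_forall. intros y. apply exR_cont. intros z.
    apply (cont2_2 h). apply inner_cont2. exact Hc.
Qed.

Lemma ibp_x (T : R) φ : C3 φ -> exD dX φ -> C3 (pD dX φ) ->
  (forall s t x, φ s t (x + 2 * PI) = φ s t x) ->
  forall s, torus_int T (pD dX φ s) = 0.
Proof.
  intros Hc Hd Hc' Hp s. unfold torus_int.
  rewrite (RInt_ext _ (fun _ => 0)).
  - rewrite RInt_const. apply Rmult_0_r.
  - intros t _. simpl.
    rewrite (RInt_Derive (fun u => φ s t u)).
    + rewrite <- (Rplus_0_l (2 * PI)) at 1. rewrite Hp. ring.
    + intros x _. apply (Hd s t x).
    + intros x _. apply (C3_x (pD dX φ)). exact Hc'.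
Qed.

Lemma ibp_t (T : R) φ : C3 φ -> exD dT φ -> C3 (pD dT φ) ->
  (forall s t x, φ s (t + T) x = φ s t x) ->
  forall s, torus_int T (pD dT φ s) = 0.
Proof.
  intros Hc Hd Hc' Hp s. unfold torus_int.
  set (h := fun t => RInt (fun x => φ s t x) 0 (2 * PI)).
  assert (HD : forall t, Derive h t = RInt (fun x => pD dT φ s t x) 0 (2 * PI)).
  { intros t. apply is_derive_unique. apply inner_derive_t; auto. }
  rewrite (RInt_ext _ (Derive h)).
  - rewrite RInt_Derive.
    + unfold h. rewrite (RInt_ext (fun x => φ s T x) (fun x => φ s 0 x)). ring.
      intros x _. rewrite <- (Rplus_0_l T) at 1. apply Hp.
    + intros t _. eexists. apply inner_derive_t; auto.
    + intros t _. apply continuous_ext with (f := fun t => RInt (fun x => pD dT φ s t x) 0 (2 * PI)).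
      * intros; rewrite HD; reflexivity.
      * apply (cont2_2 (fun s t => RInt (fun x => pD dT φ s t x) 0 (2 * PI))). apply inner_cont2. exact Hc'.
  - intros t _. rewrite HD. reflexivity.
Qed.

Lemma inner_ex φ s t : C3 φ -> ex_RInt (fun x => φ s t x) 0 (2 * PI).
Proof. intros Hc. apply exR_cont. intros z. apply C3_x. exact Hc. Qed.

Lemma outer_ex (T : R) φ s : C3 φ -> ex_RInt (fun t => RInt (fun x => φ s t x) 0 (2 * PI)) 0 T.
Proof.
  intros Hc. apply exR_cont. intros z.
  apply (cont2_2 (fun s t => RInt (fun x => φ s t x) 0 (2 * PI))). apply inner_cont2. exact Hc.
Qed.

Lemma tint_add (T : R) φ ψ s : C3 φ -> C3 ψ ->
  torus_int T (fun t x => φ s t x + ψ s t x) = torus_int T (φ s) + torus_int T (ψ s).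
Proof.
  intros H1 H2. unfold torus_int.
  rewrite (RInt_ext _ (fun t => RInt (fun x => φ s t x) 0 (2 * PI) + RInt (fun x => ψ s t x) 0 (2 * PI))).
  - exact (@RInt_plus R_CompleteNormedModule _ _ _ _ (outer_ex T φ s H1) (outer_ex T ψ s H2)).
  - intros t _. exact (@RInt_plus R_CompleteNormedModule _ _ _ _ (inner_ex φ s t H1) (inner_ex ψ s t H2)).
Qed.

Lemma tint_scal (T : R) c φ s : C3 φ ->
  torus_int T (fun t x => c * φ s t x) = c * torus_int T (φ s).
Proof.
  intros H1. unfold torus_int.
  rewrite (RInt_ext _ (fun t => c * RInt (fun x => φ s t x) 0 (2 * PI))).
  - exact (@RInt_scal R_CompleteNormedModule _ _ _ _ (outer_ex T φ s H1)).
  - intros t _. exact (@RInt_scal R_CompleteNormedModule _ _ _ _ (inner_ex φ s t H1)).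
Qed.

Lemma tint_nonneg (T : R) φ s : 0 <= T -> C3 φ -> (forall t x, 0 <= φ s t x) -> 0 <= torus_int T (φ s).
Proof.
  intros HT Hc Hp. unfold torus_int. apply RInt_ge_0; auto.
  apply outer_ex; auto.
  intros t _. apply RInt_ge_0. apply PI2_pos. apply inner_ex; auto.
  intros; apply Hp.
Qed.

Lemma tint_const (T c : R) : torus_int T (fun _ _ => c) = c * (2 * PI) * T.
Proof.
  unfold torus_int. rewrite RInt_const.
  rewrite RInt_const. unfold scal; simpl. unfold mult; simpl. ring.
Qed.

Lemma RInt_pos (g : R -> R) a b x0 : a < b -> (forall z, continuous g z) ->
  (forall z, 0 <= g z) -> a <= x0 <= b -> 0 < g x0 -> 0 < RInt g a b.
Proof.
  intros Hab Hc Hp Hx Hg.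
  assert (Hc2 : 0 < g x0 / 2) by lra.
  destruct (proj1 (filterlim_locally _ _) (Hc x0) (mkposreal _ Hc2)) as [d Hd].
  assert (Hd' : forall y, Rabs (y - x0) < d -> g x0 / 2 < g y).
  { intros y Hy. specialize (Hd y Hy). apply ballR in Hd. simpl in Hd.
    apply Rabs_def2 in Hd. simpl in Hd. destruct Hd as [Ha Hb]. unfold minus, plus, opp in Ha, Hb; simpl in Ha, Hb. lra. }
  pose proof (posd d).
  set (lo := Rmax a (x0 - d / 2)). set (hi := Rmin b (x0 + d / 2)).
  assert (Hlo : a <= lo /\ x0 - d/2 <= lo /\ (lo = a \/ lo = x0 - d/2)).
  { unfold lo. split; [apply Rmax_l | split; [apply Rmax_r|]].
    unfold Rmax; destruct (Rle_dec a (x0 - d/2)); auto. }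
  assert (Hhi : hi <= b /\ hi <= x0 + d/2 /\ (hi = b \/ hi = x0 + d/2)).
  { unfold hi. split; [apply Rmin_l | split; [apply Rmin_r|]].
    unfold Rmin; destruct (Rle_dec b (x0 + d/2)); auto. }
  assert (Hlh : lo < hi) by (destruct Hlo as [? [? [?|?]]]; destruct Hhi as [? [? [?|?]]]; lra).
  assert (E : forall u v, ex_RInt g u v) by (intros; apply exR_cont; auto).
  rewrite <- (RInt_Chasles g a lo b) by auto.
  rewrite <- (RInt_Chasles g lo hi b) by auto.
  assert (0 <= RInt g a lo) by (apply RInt_ge_0; auto; lra).
  assert (0 <= RInt g hi b) by (apply RInt_ge_0; auto; lra).
  assert (RInt (fun _ => g x0 / 2) lo hi <= RInt g lo hi).
  { apply RInt_le; auto. lra. apply ex_RInt_const.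
    intros y Hy. apply Rlt_le. apply Hd'. apply Rabs_def1; destruct Hlo as [? [? ?]]; destruct Hhi as [? [? ?]]; lra. }
  rewrite RInt_const in H2. unfold scal in H2; simpl in H2; unfold mult in H2; simpl in H2.
  unfold plus; simpl.
  assert (0 < (hi - lo) * (g x0 / 2)) by (apply Rmult_lt_0_compat; lra).
  lra.
Qed.

Lemma tint_pos (T : R) φ s t0 x0 : 0 < T -> C3 φ -> (forall t x, 0 <= φ s t x) ->
  0 <= t0 <= T -> 0 <= x0 <= 2 * PI -> 0 < φ s t0 x0 -> 0 < torus_int T (φ s).
Proof.
  intros HT Hc Hp Ht Hx Hpos. unfold torus_int.
  pose proof PI_RGT_0.
  apply RInt_pos with t0; auto.
  - intros z. apply (cont2_2 (fun s t => RInt (fun x => φ s t x) 0 (2 * PI))). apply inner_cont2. exact Hc.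
  - intros z. apply RInt_ge_0. apply PI2_pos. apply inner_ex; auto. intros; apply Hp.
  - apply RInt_pos with x0; auto. lra. intros z. apply C3_x. exact Hc.
Qed.

Definition fadd (f g : R -> R -> R -> R) := fun s t x => f s t x + g s t x.
Definition fmul (f g : R -> R -> R -> R) := fun s t x => f s t x * g s t x.
Definition fsc (c : R) (f : R -> R -> R -> R) := fun s t x => c * f s t x.

Lemma funext3 (f g : R -> R -> R -> R) : (forall s t x, f s t x = g s t x) -> f = g.
Proof.
  intros H. apply functional_extensionality; intro s.
  apply functional_extensionality; intro t. apply functional_extensionality; intro x. apply H.
Qed.

Lemma exD_fadd d f g : exD d f -> exD d g -> exD d (fadd f g).
Proof.
  intros H1 H2 s t x. specialize (H1 s t x). specialize (H2 s t x).
  destruct d; unfold fadd; exact (ex_derive_plus _ _ _ H1 H2).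
Qed.
Lemma exD_fmul d f g : exD d f -> exD d g -> exD d (fmul f g).
Proof.
  intros H1 H2 s t x. specialize (H1 s t x). specialize (H2 s t x).
  destruct d; unfold fmul; exact (ex_derive_mult _ _ _ H1 H2).
Qed.
Lemma exD_fsc d c f : exD d f -> exD d (fsc c f).
Proof.
  intros H1 s t x. specialize (H1 s t x).
  destruct d; unfold fsc; exact (ex_derive_scal _ c _ H1).
Qed.

Lemma pD_fadd d f g : exD d f -> exD d g -> pD d (fadd f g) = fadd (pD d f) (pD d g).
Proof.
  intros H1 H2. apply funext3. intros s t x. specialize (H1 s t x). specialize (H2 s t x).
  destruct d; unfold fadd; simpl; exact (Derive_plus _ _ _ H1 H2).
Qed.
Lemma pD_fmul d f g : exD d f -> exD d g -> pD d (fmul f g) = fadd (fmul (pD d f) g) (fmul f (pD d g)).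
Proof.
  intros H1 H2. apply funext3. intros s t x. specialize (H1 s t x). specialize (H2 s t x).
  destruct d; unfold fadd, fmul; simpl; exact (Derive_mult _ _ _ H1 H2).
Qed.
Lemma pD_fsc d c f : pD d (fsc c f) = fsc c (pD d f).
Proof.
  apply funext3. intros s t x.
  destruct d; unfold fsc; simpl; apply Derive_scal.
Qed.

Lemma C3_fadd f g : C3 f -> C3 g -> C3 (fadd f g).
Proof. apply C3_plus. Qed.
Lemma C3_fmul f g : C3 f -> C3 g -> C3 (fmul f g).
Proof. apply C3_mult. Qed.
Lemma C3_fsc c f : C3 f -> C3 (fsc c f).
Proof. intros H. apply (C3_mult (fun _ _ _ => c) f). apply C3_const. exact H. Qed.

Lemma D1_fadd f g : D1 f -> D1 g -> D1 (fadd f g).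
Proof.
  intros [H1 H1'] [H2 H2']. split. apply C3_fadd; auto.
  intros d. destruct (H1' d), (H2' d). split. apply exD_fadd; auto.
  rewrite pD_fadd by auto. apply C3_fadd; auto.
Qed.
Lemma D1_fmul f g : D1 f -> D1 g -> D1 (fmul f g).
Proof.
  intros [H1 H1'] [H2 H2']. split. apply C3_fmul; auto.
  intros d. destruct (H1' d), (H2' d). split. apply exD_fmul; auto.
  rewrite pD_fmul by auto. apply C3_fadd; apply C3_fmul; auto.
Qed.
Lemma D1_fsc c f : D1 f -> D1 (fsc c f).
Proof.
  intros [H1 H1']. split. apply C3_fsc; auto.
  intros d. destruct (H1' d). split. apply exD_fsc; auto.
  rewrite pD_fsc. apply C3_fsc; auto.
Qed.

Lemma smooth_C3 f l : smooth3 f -> C3 (iterD l f).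
Proof.
  intros H s t x. destruct (H l) as [Hc _].
  eapply continuous_ext; [| apply (Hc s t x)].
  intros [[a b] c]. reflexivity.
Qed.

Lemma smooth_D1 f l : smooth3 f -> D1 (iterD l f).
Proof.
  intros H. split. apply smooth_C3; auto.
  intros d. split.
  - intros s t x. destruct (H l) as [_ He]. destruct (He s t x) as [? [? ?]].
    destruct d; auto.
  - apply (smooth_C3 f (d :: l)). auto.
Qed.

Lemma smooth_pD f d : smooth3 f -> smooth3 (pD d f).
Proof.
  intros H l.
  assert (E : iterD l (pD d f) = iterD (l ++ (d :: nil)) f).
  { unfold iterD. rewrite fold_right_app. reflexivity. }
  rewrite E. apply H.
Qed.

Lemma D1_of f : smooth3 f -> D1 f.
Proof. intros H. apply (smooth_D1 f nil H). Qed.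

Lemma exD_of f d : smooth3 f -> exD d f.
Proof. intros H. destruct (D1_of f H) as [_ H']. apply H'. Qed.

Lemma schwarz_t f : smooth3 f -> forall s t x, pD dS (pD dT f) s t x = pD dT (pD dS f) s t x.
Proof.
  intros H s t x.
  pose proof (Schwarz (fun u v => f u v x) s t) as HS. simpl in HS. apply HS.
  - exists (mkposreal 1 Rlt_0_1). intros u v _ _. repeat split.
    + apply (exD_of f dS H u v x).
    + apply (exD_of f dT H u v x).
    + apply (exD_of (pD dT f) dS (smooth_pD f dT H) u v x).
    + apply (exD_of (pD dS f) dT (smooth_pD f dS H) u v x).
  - apply (C3_2d_st (iterD (dS :: dT :: nil) f)). apply smooth_C3; auto.
  - apply (C3_2d_st (iterD (dT :: dS :: nil) f)). apply smooth_C3; auto.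
Qed.

Lemma schwarz_x f : smooth3 f -> forall s t x, pD dS (pD dX f) s t x = pD dX (pD dS f) s t x.
Proof.
  intros H s t x.
  pose proof (Schwarz (fun u v => f u t v) s x) as HS. simpl in HS. apply HS.
  - exists (mkposreal 1 Rlt_0_1). intros u v _ _. repeat split.
    + apply (exD_of f dS H u t v).
    + apply (exD_of f dX H u t v).
    + apply (exD_of (pD dX f) dS (smooth_pD f dX H) u t v).
    + apply (exD_of (pD dS f) dX (smooth_pD f dS H) u t v).
  - apply (C3_2d_sx (iterD (dS :: dX :: nil) f)). apply smooth_C3; auto.
  - apply (C3_2d_sx (iterD (dX :: dS :: nil) f)). apply smooth_C3; auto.
Qed.

Definition EqY (Y : nat -> R -> R -> R -> R) := forall i s t x, (i < 4)%nat ->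
      pD dS (Y i) s t x
      + sum_f_R0 (fun j => M1 i j * pD dT (Y j) s t x) 3
      + sum_f_R0 (fun j => M2 i j * pD dX (Y j) s t x) 3 = 0.

Lemma is_derive_sum (g : nat -> R -> R) dg n s :
  (forall j, (j <= n)%nat -> is_derive (g j) s (dg j)) ->
  is_derive (fun u => sum_f_R0 (fun j => g j u) n) s (sum_f_R0 dg n).
Proof.
  induction n; intros H.
  - simpl. apply H. lia.
  - simpl. apply (@is_derive_plus R_AbsRing R_NormedModule).
    + apply IHn. intros; apply H; lia.
    + apply H. lia.
Qed.

Lemma is_derive_cmul (h : R -> R) c s : ex_derive h s -> is_derive (fun u => c * h u) s (c * Derive h s).
Proof.
  intros H. apply is_derive_scal. apply Derive_correct. exact H.
Qed.

Lemma eq_pD Y : (forall k, (k < 4)%nat -> smooth3 (Y k)) -> EqY Y -> EqY (fun k => pD dS (Y k)).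
Proof.
  intros Hs He i s t x Hi. cbv beta.
  set (G := fun u => pD dS (Y i) u t x + sum_f_R0 (fun j => M1 i j * pD dT (Y j) u t x) 3
                     + sum_f_R0 (fun j => M2 i j * pD dX (Y j) u t x) 3).
  assert (HG : is_derive G s (pD dS (pD dS (Y i)) s t x
       + sum_f_R0 (fun j => M1 i j * pD dS (pD dT (Y j)) s t x) 3
       + sum_f_R0 (fun j => M2 i j * pD dS (pD dX (Y j)) s t x) 3)).
  { unfold G. apply (@is_derive_plus R_AbsRing R_NormedModule); [apply (@is_derive_plus R_AbsRing R_NormedModule)|].
    - apply Derive_correct. apply (exD_of _ dS (smooth_pD _ dS (Hs i Hi)) s t x).
    - apply (is_derive_sum (fun j u => M1 i j * pD dT (Y j) u t x)).
      intros j Hj. apply is_derive_cmul.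
      apply (exD_of _ dS (smooth_pD _ dT (Hs j ltac:(lia))) s t x).
    - apply (is_derive_sum (fun j u => M2 i j * pD dX (Y j) u t x)).
      intros j Hj. apply is_derive_cmul.
      apply (exD_of _ dS (smooth_pD _ dX (Hs j ltac:(lia))) s t x). }
  apply is_derive_unique in HG.
  assert (H0 : Derive G s = 0).
  { rewrite (Derive_ext G (fun _ => 0)). apply Derive_const. intros u. apply He. exact Hi. }
  rewrite H0 in HG.
  rewrite (sum_eq (fun j => M1 i j * pD dT (pD dS (Y j)) s t x) (fun j => M1 i j * pD dS (pD dT (Y j)) s t x)).
  rewrite (sum_eq (fun j => M2 i j * pD dX (pD dS (Y j)) s t x) (fun j => M2 i j * pD dS (pD dX (Y j)) s t x)).
  - rewrite HG. reflexivity.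
  - intros j Hj. rewrite schwarz_x. reflexivity. apply Hs. lia.
  - intros j Hj. rewrite schwarz_t. reflexivity. apply Hs. lia.
Qed.

Definition Bf (A C : nat -> R -> R -> R -> R) :=
  fadd (fadd (fadd (fmul (A 0%nat) (C 0%nat)) (fmul (A 1%nat) (C 1%nat))) (fmul (A 2%nat) (C 2%nat))) (fmul (A 3%nat) (C 3%nat)).

Definition LYc (Y : nat -> R -> R -> R -> R) (i : nat) :=
  match i with
  | 0%nat => fadd (fsc (-1) (pD dT (Y 1%nat))) (pD dX (Y 2%nat))
  | 1%nat => fadd (pD dT (Y 0%nat)) (fsc (-1) (pD dX (Y 3%nat)))
  | 2%nat => fadd (pD dT (Y 3%nat)) (fsc (-1) (pD dX (Y 0%nat)))
  | _ => fadd (fsc (-1) (pD dT (Y 2%nat))) (pD dX (Y 1%nat))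
  end.

Definition Sm (Y : nat -> R -> R -> R -> R) := forall k, (k < 4)%nat -> smooth3 (Y k).

Definition Per (T : R) (f : R -> R -> R -> R) :=
  forall s t x, f s (t + T) x = f s t x /\ f s t (x + 2 * PI) = f s t x.

Lemma Per_fadd T f g : Per T f -> Per T g -> Per T (fadd f g).
Proof. intros H1 H2 s t x. unfold fadd. destruct (H1 s t x), (H2 s t x). split; congruence. Qed.
Lemma Per_fmul T f g : Per T f -> Per T g -> Per T (fmul f g).
Proof. intros H1 H2 s t x. unfold fmul. destruct (H1 s t x), (H2 s t x). split; congruence. Qed.
Lemma Per_fsc T c f : Per T f -> Per T (fsc c f).
Proof. intros H1 s t x. unfold fsc. destruct (H1 s t x). split; congruence. Qed.
Lemma Per_pDS T f : Per T f -> Per T (pD dS f).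
Proof.
  intros H1 s t x. simpl. split; apply Derive_ext; intros u; apply H1.
Qed.

Lemma Sm_pD Y : Sm Y -> Sm (fun k => pD dS (Y k)).
Proof. intros H k Hk. apply smooth_pD. apply H; auto. Qed.

Ltac smt := match goal with |- smooth3 (?Y ?k) => match goal with H : Sm Y |- _ => exact (H k ltac:(lia)) end end.
Ltac exd := repeat match goal with
  | |- exD _ (fadd _ _) => apply exD_fadd
  | |- exD _ (fmul _ _) => apply exD_fmul
  | |- exD _ (fsc _ _) => apply exD_fsc
  | |- exD _ (pD ?d ?f) => exact (exD_of _ _ (smooth_pD f d ltac:(smt)))
  | |- exD _ ?f => exact (exD_of f _ ltac:(smt))
  end.
Ltac d1 := repeat match goal with
  | |- D1 (fadd _ _) => apply D1_fadd
  | |- D1 (fmul _ _) => apply D1_fmul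
  | |- D1 (fsc _ _) => apply D1_fsc
  | |- D1 (pD ?d ?f) => exact (smooth_D1 f (d :: nil) ltac:(smt))
  | |- D1 ?f => exact (D1_of f ltac:(smt))
  end.
Lemma pD_B d A C : Sm A -> Sm C ->
  pD d (Bf A C) = fadd (Bf (fun k => pD d (A k)) C) (Bf A (fun k => pD d (C k))).
Proof.
  intros HA HC. unfold Bf.
  rewrite !(pD_fadd d) by exd. rewrite !(pD_fmul d) by exd.
  apply funext3. intros s t x. unfold fadd, fmul. ring.
Qed.

Lemma D1_B A C : Sm A -> Sm C -> D1 (Bf A C).
Proof. intros HA HC. unfold Bf. d1. Qed.

Lemma D1_LYc Y i : Sm Y -> D1 (LYc Y i).
Proof.
  intros HY. destruct i as [|[|[|[|i]]]]; unfold LYc; cbv beta iota; d1.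
Qed.

Lemma Sm_LYc_Bf A C : Sm A -> Sm C -> D1 (Bf A (LYc C)) /\ D1 (Bf (LYc A) C).
Proof.
  intros HA HC. unfold Bf. split; d1; apply D1_LYc; assumption.
Qed.

Lemma EqY_L Y : EqY Y -> forall i, (i < 4)%nat -> forall s t x, pD dS (Y i) s t x = - LYc Y i s t x.
Proof.
  intros H i Hi s t x. pose proof (H i s t x Hi) as E.
  destruct i as [|[|[|[|i]]]]; try lia; simpl in E |- *; unfold fadd, fsc; lra.
Qed.

Lemma Per_fam_B T A C : (forall k, (k < 4)%nat -> Per T (A k)) -> (forall k, (k < 4)%nat -> Per T (C k)) -> Per T (Bf A C).
Proof.
  intros HA HC. unfold Bf.
  repeat apply Per_fadd; apply Per_fmul; first [apply HA | apply HC]; lia.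
Qed.

Lemma sym_L (T : R) A C : Sm A -> Sm C ->
  (forall k, (k < 4)%nat -> Per T (A k)) -> (forall k, (k < 4)%nat -> Per T (C k)) ->
  forall s, torus_int T (Bf A (LYc C) s) = torus_int T (Bf (LYc A) C s).
Proof.
  intros HA HC PA PC s.
  set (P1 := fadd (fadd (fadd (fsc (-1) (fmul (A 0%nat) (C 1%nat))) (fmul (A 1%nat) (C 0%nat))) (fmul (A 2%nat) (C 3%nat))) (fsc (-1) (fmul (A 3%nat) (C 2%nat)))).
  set (P2 := fadd (fadd (fadd (fmul (A 0%nat) (C 2%nat)) (fsc (-1) (fmul (A 1%nat) (C 3%nat)))) (fsc (-1) (fmul (A 2%nat) (C 0%nat)))) (fmul (A 3%nat) (C 1%nat))).
  assert (D1P1 : D1 P1) by (unfold P1; d1).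
  assert (D1P2 : D1 P2) by (unfold P2; d1).
  assert (PerP1 : Per T P1).
  { unfold P1. repeat first [apply Per_fadd | apply Per_fsc | apply Per_fmul]; first [apply PA | apply PC]; lia. }
  assert (PerP2 : Per T P2).
  { unfold P2. repeat first [apply Per_fadd | apply Per_fsc | apply Per_fmul]; first [apply PA | apply PC]; lia. }
  assert (Hid : fadd (Bf A (LYc C)) (fsc (-1) (Bf (LYc A) C)) = fadd (pD dT P1) (pD dX P2)).
  { unfold P1, P2. rewrite !(pD_fadd dT) by exd. rewrite !(pD_fadd dX) by exd. rewrite !(pD_fsc dT), !(pD_fsc dX). rewrite !(pD_fmul dT) by exd. rewrite !(pD_fmul dX) by exd.
    apply funext3. intros s' t x. unfold Bf, LYc, fadd, fsc, fmul. ring. }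
  destruct (Sm_LYc_Bf A C HA HC) as [[Hc1 _] [Hc2 _]].
  destruct D1P1 as [HP1c0 HP1]. destruct (HP1 dT) as [HP1e HP1c].
  destruct D1P2 as [HP2c0 HP2]. destruct (HP2 dX) as [HP2e HP2c].
  assert (E : torus_int T (fadd (Bf A (LYc C)) (fsc (-1) (Bf (LYc A) C)) s) = 0).
  { rewrite Hid. unfold fadd at 1. rewrite tint_add by auto.
    rewrite ibp_t, ibp_x; auto.
    - ring.
    - auto.
    - intros; apply PerP2.
    - auto.
    - intros; apply PerP1. }
  unfold fadd at 1 in E. rewrite tint_add in E; auto.
  - unfold fsc in E. rewrite tint_scal in E by auto. lra.
  - apply C3_fsc. auto.
Qed.

Lemma tint_fadd T f g s : C3 f -> C3 g -> torus_int T (fadd f g s) = torus_int T (f s) + torus_int T (g s).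
Proof. intros. unfold fadd. apply tint_add; auto. Qed.
Lemma tint_fsc T c f s : C3 f -> torus_int T (fsc c f s) = c * torus_int T (f s).
Proof. intros. unfold fsc. apply tint_scal; auto. Qed.

Lemma D1C3 f : D1 f -> C3 f. Proof. intros [H _]; exact H. Qed.

Lemma second_deriv_nonneg (T : R) Y : 0 < T -> Sm Y -> EqY Y -> (forall k, (k < 4)%nat -> Per T (Y k)) ->
  forall s, 0 <= torus_int T (pD dS (pD dS (Bf Y Y)) s).
Proof.
  intros HT HY HE HP s.
  set (V := fun k => pD dS (Y k)).
  set (U := fun k => pD dS (V k)).
  assert (HV : Sm V) by (apply Sm_pD; auto).
  assert (HU : Sm U) by (apply Sm_pD; auto).
  assert (EV : EqY V) by (apply eq_pD; auto).
  assert (PV : forall k, (k < 4)%nat -> Per T (V k)) by (intros; apply Per_pDS; auto).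
  rewrite (pD_B dS Y Y HY HY). fold V.
  rewrite (pD_fadd dS) by (destruct (D1_B V Y HV HY) as [_ H]; apply H || (destruct (D1_B Y V HY HV) as [_ H']; apply H')).
  rewrite (pD_B dS V Y HV HY), (pD_B dS Y V HY HV). fold U. fold V.
  assert (C1 : C3 (Bf U Y)) by (apply D1C3, D1_B; auto).
  assert (C2 : C3 (Bf V V)) by (apply D1C3, D1_B; auto).
  assert (C3' : C3 (Bf Y U)) by (apply D1C3, D1_B; auto).
  rewrite tint_fadd by (apply C3_fadd; auto).
  rewrite !tint_fadd by auto.
  assert (E1 : Bf U Y = Bf Y U) by (apply funext3; intros; unfold Bf, fadd, fmul; ring).
  assert (E2 : Bf Y U = fsc (-1) (Bf Y (LYc V))).
  { apply funext3; intros s' t x. unfold Bf, fadd, fmul, fsc, U.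
    rewrite !(EqY_L V EV) by lia. ring. }
  assert (E3 : Bf (LYc Y) V = fsc (-1) (Bf V V)).
  { apply funext3; intros s' t x. unfold Bf, fadd, fmul, fsc, V.
    rewrite !(EqY_L Y HE) by lia. ring. }
  assert (CL : C3 (Bf Y (LYc V))) by (destruct (Sm_LYc_Bf Y V HY HV) as [[H _] _]; exact H).
  assert (Hsym : torus_int T (Bf Y (LYc V) s) = torus_int T (Bf (LYc Y) V s)) by (apply sym_L; auto).
  assert (K : torus_int T (Bf Y U s) = torus_int T (Bf V V s)).
  { rewrite E2, tint_fsc by auto. rewrite Hsym, E3, tint_fsc by auto. ring. }
  rewrite E1, K.
  assert (0 <= torus_int T (Bf V V s)).
  { apply tint_nonneg; auto. lra. intros t x. unfold Bf, fadd, fmul.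
    pose proof (Rle_0_sqr (V 0%nat s t x)). pose proof (Rle_0_sqr (V 1%nat s t x)).
    pose proof (Rle_0_sqr (V 2%nat s t x)). pose proof (Rle_0_sqr (V 3%nat s t x)).
    unfold Rsqr in *. lra. }
  lra.
Qed.

Lemma mono_on (f df : R -> R) a b : (forall s, is_derive f s (df s)) ->
  (forall s, a <= s <= b -> 0 <= df s) -> a <= b -> f a <= f b.
Proof.
  intros Hd Hp Hab.
  destruct (MVT_gen f a b df) as [c [Hc E]].
  - intros x _. apply Hd.
  - intros x _. apply continuity_pt_filterlim. apply (@ex_derive_continuous R_AbsRing R_NormedModule). eexists. apply Hd.
  - rewrite Rmin_left in Hc by lra. rewrite Rmax_right in Hc by lra.
    assert (0 <= df c * (b - a)) by (apply Rmult_le_pos; [apply Hp; lra | lra]). lra.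
Qed.

Lemma int_contra (F : R -> R) l s0 c : (forall s, continuous F s) -> 0 < c ->
  is_RInt_gen F (Rbar_locally m_infty) (Rbar_locally p_infty) l ->
  ((forall s, s0 <= s -> c <= F s) \/ (forall s, s <= s0 -> c <= F s)) -> False.
Proof.
  intros Hc Hc0 HI Hside.
  assert (H1 : 0 < 1) by lra.
  specialize (HI (ball l (mkposreal 1 H1)) (locally_ball l _)).
  destruct HI as [P Q [M1 HP] [M2 HQ] Hall].
  assert (E : forall u v, ex_RInt F u v) by (intros; apply exR_cont; auto).
  assert (Hget : forall a b, a < M1 -> M2 < b -> exists y, RInt F a b = y /\ Rabs (y - l) < 1).
  { intros a b Ha Hb. destruct (Hall a b (HP a Ha) (HQ b Hb)) as [y [Hy Hb']].
    exists y. split. apply is_RInt_unique. exact Hy. apply ballR in Hb'. exact Hb'. }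
  assert (Hlow : forall u v, u <= v -> (forall s, u <= s <= v -> c <= F s) -> c * (v - u) <= RInt F u v).
  { intros u v Huv Hs.
    assert (RInt (fun _ => c) u v <= RInt F u v).
    { apply RInt_le; auto. apply ex_RInt_const. intros; apply Hs; lra. }
    rewrite RInt_const in H. unfold scal in H; simpl in H; unfold mult in H; simpl in H. lra. }
  destruct Hside as [Hr | Hl].
  - set (a := M1 - 1). set (b1 := Rmax (M2 + 1) s0 + 1). set (b2 := b1 + 3 / c).
    assert (Hb1 : M2 < b1 /\ s0 < b1) by (unfold b1; pose proof (Rmax_l (M2+1) s0); pose proof (Rmax_r (M2+1) s0); lra).
    assert (Hq : 0 < 3 / c) by (apply Rdiv_lt_0_compat; lra).
    destruct (Hget a b1) as [y1 [Ey1 Hy1]]. unfold a; lra. lra.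
    destruct (Hget a b2) as [y2 [Ey2 Hy2]]. unfold a; lra. unfold b2; lra.
    assert (Ch : RInt F a b2 = RInt F a b1 + RInt F b1 b2).
    { symmetry. exact (@RInt_Chasles R_CompleteNormedModule F a b1 b2 (E _ _) (E _ _)). }
    assert (L : c * (b2 - b1) <= RInt F b1 b2) by (apply Hlow; [unfold b2; lra | intros; apply Hr; lra]).
    assert (c * (b2 - b1) = 3) by (unfold b2; field; lra).
    apply Rabs_def2 in Hy1. apply Rabs_def2 in Hy2. lra.
  - set (b := M2 + 1). set (a1 := Rmin (M1 - 1) s0 - 1). set (a2 := a1 - 3 / c).
    assert (Ha1 : a1 < M1 /\ a1 < s0) by (unfold a1; pose proof (Rmin_l (M1-1) s0); pose proof (Rmin_r (M1-1) s0); lra).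
    assert (Hq : 0 < 3 / c) by (apply Rdiv_lt_0_compat; lra).
    destruct (Hget a1 b) as [y1 [Ey1 Hy1]]. lra. unfold b; lra.
    destruct (Hget a2 b) as [y2 [Ey2 Hy2]]. unfold a2; lra. unfold b; lra.
    assert (Ch : RInt F a2 b = RInt F a2 a1 + RInt F a1 b).
    { symmetry. exact (@RInt_Chasles R_CompleteNormedModule F a2 a1 b (E _ _) (E _ _)). }
    assert (L : c * (a1 - a2) <= RInt F a2 a1) by (apply Hlow; [unfold a2; lra | intros; apply Hl; lra]).
    assert (c * (a1 - a2) = 3) by (unfold a2; field; lra).
    apply Rabs_def2 in Hy1. apply Rabs_def2 in Hy2. lra.
Qed.

Lemma energy_zero (F G H : R -> R) l :
  (forall s, is_derive F s (G s)) -> (forall s, is_derive G s (H s)) -> (forall s, 0 <= H s) ->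
  (forall s, 0 <= F s) -> is_RInt_gen F (Rbar_locally m_infty) (Rbar_locally p_infty) l ->
  forall s, F s = 0.
Proof.
  intros HF HG HH Hpos HI s0.
  destruct (Rle_lt_or_eq_dec 0 (F s0) (Hpos s0)) as [Hlt|Heq]; [|auto].
  exfalso.
  assert (Hc : forall s, continuous F s) by (intros; apply (@ex_derive_continuous R_AbsRing R_NormedModule); eexists; apply HF).
  apply (int_contra F l s0 (F s0) Hc Hlt HI).
  destruct (Rle_or_lt 0 (G s0)) as [Hg|Hg].
  - left. intros s Hs. apply (mono_on F G s0 s HF); auto.
    intros u Hu. eapply Rle_trans. exact Hg. apply (mono_on G H s0 u HG); auto. lra.
  - right. intros s Hs.
    assert (- F s <= - F s0).
    { apply (mono_on (fun u => - F u) (fun u => - G u) s s0); auto.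
      - intros u. apply (@is_derive_opp R_AbsRing R_NormedModule). apply HF.
      - intros u Hu. assert (G u <= G s0) by (apply (mono_on G H u s0 HG); auto; lra). lra. }
    lra.
Qed.

Lemma irrational_of (T : R) : has_irrationality_measure (2 * PI / T) 2 ->
  forall (p : Z) (q : nat), (0 < q)%nat -> 2 * PI / T <> IZR p / INR q.
Proof.
  intros [_ H2] p q Hq E.
  assert (3 <= 2); [|lra].
  apply H2. intros rho [c [Hc Hall]]. exfalso.
  specialize (Hall p q Hq). rewrite E, Rminus_eq_0, Rabs_R0 in Hall.
  assert (0 < c / Rpower (INR q) rho).
  { apply Rdiv_lt_0_compat; auto. unfold Rpower. apply exp_pos. }
  lra.
Qed.


Definition Sp (g : R -> R) (p : R) := forall y, g (y + p) = g y.

Lemma Sp_sub g p q : Sp g p -> Sp g q -> Sp g (p - q).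
Proof.
  intros Hp Hq y. rewrite <- (Hq (y + (p - q))).
  replace (y + (p - q) + q) with (y + p) by ring. apply Hp.
Qed.
Lemma Sp_0 g : Sp g 0. Proof. intros y. rewrite Rplus_0_r. reflexivity. Qed.
Lemma Sp_opp g p : Sp g p -> Sp g (- p).
Proof. intros H. replace (- p) with (0 - p) by ring. apply Sp_sub; auto using Sp_0. Qed.
Lemma Sp_add g p q : Sp g p -> Sp g q -> Sp g (p + q).
Proof. intros H1 H2. replace (p + q) with (p - - q) by ring. apply Sp_sub; auto using Sp_opp. Qed.
Lemma Sp_nat g p : Sp g p -> forall n : nat, Sp g (INR n * p).
Proof.
  intros H n. induction n.
  - simpl. rewrite Rmult_0_l. apply Sp_0.
  - rewrite S_INR. replace ((INR n + 1) * p) with (INR n * p + p) by ring. apply Sp_add; auto.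
Qed.
Lemma Sp_Z g p : Sp g p -> forall z : Z, Sp g (IZR z * p).
Proof.
  intros H z. destruct z as [|k|k].
  - rewrite Rmult_0_l. apply Sp_0.
  - rewrite <- positive_nat_Z, <- INR_IZR_INZ. apply Sp_nat; auto.
  - change (IZR (Z.neg k)) with (- IZR (Z.pos k)).
    replace (- IZR (Z.pos k) * p) with (- (IZR (Z.pos k) * p)) by ring.
    apply Sp_opp. rewrite <- positive_nat_Z, <- INR_IZR_INZ. apply Sp_nat; auto.
Qed.

Lemma my_floor (y p : R) : 0 < p -> exists z : Z, 0 <= y - IZR z * p < p.
Proof.
  intros Hp. destruct (archimed (y / p)) as [H1 H2].
  exists (up (y / p) - 1)%Z. rewrite minus_IZR.
  set (u := IZR (up (y / p))) in *.
  assert (Ey : y = (y / p) * p) by (field; lra).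
  set (r := y / p) in *.
  split.
  - assert ((u - 1) * p <= r * p) by (apply Rmult_le_compat_r; lra). lra.
  - assert (r * p < u * p) by (apply Rmult_lt_compat_r; lra). lra.
Qed.

Lemma small_eq (a : R) : (forall e, 0 < e -> Rabs a < e) -> a = 0.
Proof.
  intros H. destruct (Req_dec a 0) as [|Hn]; auto.
  exfalso. specialize (H (Rabs a) (Rabs_pos_lt a Hn)). lra.
Qed.

Lemma per_const (g : R -> R) (T : R) : 0 < T -> (forall y, continuous g y) ->
  (forall y, g (y + T) = g y) -> (forall y, g (y + 2 * PI) = g y) ->
  (forall (p : Z) (q : nat), (0 < q)%nat -> 2 * PI / T <> IZR p / INR q) ->
  forall y, g y = g 0.
Proof.
  intros HT Hc HpT HpP Hirr.
  assert (ST : Sp g T) by exact HpT.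
  assert (SP : Sp g (2 * PI)) by exact HpP.
  pose proof PI_RGT_0 as Hpi.
  destruct (classic (forall e, 0 < e -> exists p, 0 < p < e /\ Sp g p)) as [Hsmall | Hnot].
  - intros y. apply Rminus_diag_uniq. apply small_eq. intros e He.
    destruct (proj1 (filterlim_locally _ _) (Hc 0) (mkposreal e He)) as [d Hd].
    destruct (Hsmall d (cond_pos d)) as [p [Hp Sp']].
    destruct (my_floor y p (proj1 Hp)) as [z Hz].
    set (u := y - IZR z * p).
    assert (Eu : g y = g u).
    { pose proof (Sp_Z g p Sp' z u) as K. unfold u in K |- *.
      replace (y - IZR z * p + IZR z * p) with y in K by ring. exact K. }
    rewrite Eu.
    assert (Hu : ball 0 d u) by (apply ballR; rewrite Rminus_0_r; apply Rabs_def1; fold u in Hz; lra).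
    specialize (Hd u Hu). apply ballR in Hd. simpl in Hd. exact Hd.
  - exfalso.
    assert (Heps : exists e, 0 < e /\ forall p, 0 < p -> Sp g p -> e <= p).
    { apply not_all_ex_not in Hnot. destruct Hnot as [e He].
      exists e. apply imply_to_and in He. destruct He as [He1 He2]. split; auto.
      intros p Hp Sp'. destruct (Rle_or_lt e p) as [|Hlt]; auto.
      exfalso. apply He2. exists p. auto. }
    destruct Heps as [e [He Hlb]].
    set (E := fun x => 0 < - x /\ Sp g (- x)).
    assert (HE1 : bound E) by (exists 0; intros x [Hx _]; lra).
    assert (HE2 : exists x, E x) by (exists (- T); unfold E; rewrite Ropp_involutive; split; auto).
    destruct (completeness E HE1 HE2) as [m [Hub Hleast]].
    set (delta := - m).
    assert (Lb : forall p, 0 < p -> Sp g p -> delta <= p).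
    { intros p Hp Sp'. assert (E (- p)) by (unfold E; rewrite Ropp_involutive; auto).
      specialize (Hub _ H). unfold delta. lra. }
    assert (Glb : forall b, (forall p, 0 < p -> Sp g p -> b <= p) -> b <= delta).
    { intros b Hb. assert (m <= - b).
      { apply Hleast. intros x [Hx Sx]. specialize (Hb _ Hx Sx). lra. }
      unfold delta. lra. }
    assert (Hd0 : e <= delta) by (apply Glb; auto).
    assert (Sd : Sp g delta).
    { apply NNPP. intros Hn.
      assert (Ex1 : exists p1, 0 < p1 /\ Sp g p1 /\ p1 < 2 * delta).
      { apply NNPP. intros Hn1. assert (2 * delta <= delta); [|lra].
        apply Glb. intros p Hp Sp'. destruct (Rle_or_lt (2 * delta) p) as [|Hlt]; auto.
        exfalso. apply Hn1. exists p. auto. }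
      destruct Ex1 as [p1 [Hp1 [Sp1 Hp1d]]].
      assert (Hgt : delta < p1).
      { destruct (Rle_lt_or_eq_dec _ _ (Lb p1 Hp1 Sp1)) as [|Heq]; auto. rewrite Heq in Hn. contradiction. }
      assert (Ex2 : exists p2, 0 < p2 /\ Sp g p2 /\ p2 < p1).
      { apply NNPP. intros Hn2. assert (p1 <= delta); [|lra].
        apply Glb. intros p Hp Sp'. destruct (Rle_or_lt p1 p) as [|Hlt]; auto.
        exfalso. apply Hn2. exists p. auto. }
      destruct Ex2 as [p2 [Hp2 [Sp2 Hp21]]].
      assert (delta <= p2) by (apply Lb; auto).
      assert (delta <= p1 - p2) by (apply Lb; [lra | apply Sp_sub; auto]).
      lra. }
    assert (Mult : forall a, 0 < a -> Sp g a -> exists z : Z, a = IZR z * delta).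
    { intros a Ha Sa. destruct (my_floor a delta) as [z Hz]. lra.
      exists z. destruct (Rle_lt_or_eq_dec _ _ (proj1 Hz)) as [Hlt|Heq]; [|lra].
      exfalso. assert (delta <= a - IZR z * delta) by (apply Lb; auto; apply Sp_sub; auto; apply Sp_Z; auto). lra. }
    destruct (Mult T HT ST) as [z Ez].
    destruct (Mult (2 * PI) ltac:(lra) SP) as [w Ew].
    assert (Hz : (0 < z)%Z).
    { apply lt_0_IZR. destruct (Rle_or_lt (IZR z) 0) as [Hle|]; auto.
      exfalso. assert (IZR z * delta <= 0) by (apply Rmult_le_0_r; lra). lra. }
    apply (Hirr w (Z.to_nat z)). lia.
    rewrite INR_IZR_INZ, Z2Nat.id by lia.
    rewrite Ez, Ew. field. repeat split; try lra; apply not_0_IZR; lia.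
Qed.

Lemma between_abs a b c : Rmin a b <= c <= Rmax a b -> Rabs (c - a) <= Rabs (b - a).
Proof.
  unfold Rmin, Rmax. destruct (Rle_dec a b); intros [H1 H2];
  unfold Rabs; repeat destruct Rcase_abs; lra.
Qed.

Lemma diff_of_partials (f : R -> R -> R) x y :
  (forall u v, ex_derive (fun z => f z v) u) -> (forall u v, ex_derive (fun z => f u z) v) ->
  continuity_2d_pt (fun u v => Derive (fun z => f z v) u) x y ->
  continuity_2d_pt (fun u v => Derive (fun z => f u z) v) x y ->
  differentiable_pt_lim f x y (Derive (fun z => f z y) x) (Derive (fun z => f x z) y).
Proof.
  intros H1 H2 C1 C2 eps.
  assert (e2 : 0 < eps / 2) by (pose proof (cond_pos eps); lra).
  destruct (C1 (mkposreal _ e2)) as [d1 Hd1].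
  destruct (C2 (mkposreal _ e2)) as [d2 Hd2].
  assert (Hd : 0 < Rmin d1 d2) by (apply Rmin_pos; apply cond_pos).
  exists (mkposreal _ Hd). simpl. intros u v Hu Hv.
  assert (Hu1 : Rabs (u - x) < d1) by (pose proof (Rmin_l d1 d2); lra).
  assert (Hv1 : Rabs (v - y) < d1) by (pose proof (Rmin_l d1 d2); lra).
  assert (Hv2 : Rabs (v - y) < d2) by (pose proof (Rmin_r d1 d2); lra).
  destruct (MVT_gen (fun z => f z v) x u (fun z => Derive (fun w => f w v) z)) as [c [Hc Ec]].
  { intros z _. exact (Derive_correct _ _ (H1 z v)). }
  { intros z _; apply continuity_pt_filterlim. exact (@ex_derive_continuous R_AbsRing R_NormedModule (fun w => f w v) z (H1 z v)). }
  destruct (MVT_gen (fun z => f x z) y v (fun z => Derive (fun w => f x w) z)) as [c' [Hc' Ec']].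
  { intros z _. exact (Derive_correct _ _ (H2 x z)). }
  { intros z _; apply continuity_pt_filterlim. exact (@ex_derive_continuous R_AbsRing R_NormedModule (fun w => f x w) z (H2 x z)). }
  simpl in Ec, Ec'.
  apply between_abs in Hc. apply between_abs in Hc'.
  assert (K1 : Rabs (Derive (fun w => f w v) c - Derive (fun z => f z y) x) < eps / 2).
  { apply (Hd1 c v); lra. }
  assert (K2 : Rabs (Derive (fun w => f x w) c' - Derive (fun z => f x z) y) < eps / 2).
  { apply (Hd2 x c'). rewrite Rminus_eq_0, Rabs_R0. apply cond_pos. lra. }
  replace (f u v - f x y - (Derive (fun z => f z y) x * (u - x) + Derive (fun z => f x z) y * (v - y)))
    with ((Derive (fun w => f w v) c - Derive (fun z => f z y) x) * (u - x)
          + (Derive (fun w => f x w) c' - Derive (fun z => f x z) y) * (v - y)).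
  2: { replace (f u v - f x y) with ((f u v - f x v) + (f x v - f x y)) by ring. rewrite Ec, Ec'. ring. }
  eapply Rle_trans. apply Rabs_triang. rewrite !Rabs_mult.
  pose proof (Rmax_l (Rabs (u - x)) (Rabs (v - y))). pose proof (Rmax_r (Rabs (u - x)) (Rabs (v - y))).
  pose proof (Rabs_pos (u - x)). pose proof (Rabs_pos (v - y)).
  assert (Rabs (Derive (fun w => f w v) c - Derive (fun z => f z y) x) * Rabs (u - x) <= eps / 2 * Rmax (Rabs (u - x)) (Rabs (v - y))).
  { apply Rmult_le_compat; try apply Rabs_pos; lra. }
  assert (Rabs (Derive (fun w => f x w) c' - Derive (fun z => f x z) y) * Rabs (v - y) <= eps / 2 * Rmax (Rabs (u - x)) (Rabs (v - y))).
  { apply Rmult_le_compat; try apply Rabs_pos; lra. }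
  lra.
Qed.

Lemma transport3 (φ : R -> R -> R -> R) s sg (T : R) : 0 < T -> (sg = 1 \/ sg = -1) -> D1 φ ->
  (forall t x, pD dT φ s t x = - sg * pD dX φ s t x) ->
  (forall t x, φ s (t + T) x = φ s t x) -> (forall t x, φ s t (x + 2 * PI) = φ s t x) ->
  (forall (p : Z) (q : nat), (0 < q)%nat -> 2 * PI / T <> IZR p / INR q) ->
  forall t x, φ s t x = φ s 0 0.
Proof.
  intros HT Hsg [Hc Hd] Heq HpT HpX Hirr.
  destruct (Hd dT) as [EdT CdT]. destruct (Hd dX) as [EdX CdX].
  set (u := fun t x => φ s t x).
  assert (Line : forall t x, u t x = u 0 (x - sg * t)).
  { intros t x. set (c := x - sg * t).
    set (w := fun tau => u tau (c + sg * tau)).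
    assert (Hw : forall tau, is_derive w tau 0).
    { intros tau. apply is_derive_Reals.
      replace 0 with (pD dT φ s tau (c + sg * tau) * 1 + pD dX φ s tau (c + sg * tau) * sg) by (rewrite Heq; ring).
      apply (derivable_pt_lim_comp_2d u (fun tau => tau) (fun tau => c + sg * tau)).
      - apply (diff_of_partials u).
        + intros; apply (EdT s).
        + intros; apply (EdX s).
        + apply (C3_2d_tx (pD dT φ)). exact CdT.
        + apply (C3_2d_tx (pD dX φ)). exact CdX.
      - apply derivable_pt_lim_id.
      - apply is_derive_Reals. auto_derive; auto. ring. }
    destruct (MVT_gen w 0 t (fun _ => 0)) as [c0 [_ Ec0]].
    { intros; apply Hw. }
    { intros z _; apply continuity_pt_filterlim. exact (@ex_derive_continuous R_AbsRing R_NormedModule w z (ex_intro _ 0 (Hw z))). }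
    unfold w in Ec0. replace (c + sg * t) with x in Ec0 by (unfold c; ring).
    replace (c + sg * 0) with c in Ec0 by ring. lra. }
  set (g := fun y => u 0 y).
  assert (Hg : forall y, continuous g y).
  { intros y. apply (C3_x φ s 0 y). exact Hc. }
  assert (HgP : forall y, g (y + 2 * PI) = g y) by (intros; apply HpX).
  assert (HgT' : forall y, g (y - sg * T) = g y).
  { intros y. unfold g. rewrite <- (Line T y). unfold u. rewrite <- (Rplus_0_l T) at 1. apply HpT. }
  assert (HgT : forall y, g (y + T) = g y).
  { intros y. destruct Hsg as [E|E]; rewrite E in HgT'.
    - rewrite <- (HgT' (y + T)). f_equal. ring.
    - rewrite <- (HgT' y). f_equal. ring. }
  intros t x. change (u t x = u 0 0). rewrite Line.
  apply (per_const g T HT Hg HgT HgP Hirr).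
Qed.

Lemma pD_zero d : pD d (fun _ _ _ => 0) = (fun _ _ _ => 0).
Proof. apply funext3. intros s t x. destruct d; simpl; apply Derive_const. Qed.

Lemma iter_zero d n : Nat.iter n (pD d) (fun _ _ _ => 0) = (fun _ _ _ => 0).
Proof. induction n; simpl. reflexivity. rewrite IHn. apply pD_zero. Qed.

Lemma reduce_per (g : R -> R) (P : R) : 0 < P -> (forall y, g (y + P) = g y) ->
  forall y, exists y0, 0 <= y0 <= P /\ g y = g y0.
Proof.
  intros HP Hg y. destruct (my_floor y P HP) as [z Hz].
  exists (y - IZR z * P). split. lra.
  pose proof (Sp_Z g P Hg z (y - IZR z * P)) as K.
  replace (y - IZR z * P + IZR z * P) with y in K by ring. exact K.
Qed.

Lemma sq_sum_pos (a b c d : R) : 0 <= a * a + b * b + c * c + d * d.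
Proof. pose proof (Rle_0_sqr a). pose proof (Rle_0_sqr b). pose proof (Rle_0_sqr c). pose proof (Rle_0_sqr d). unfold Rsqr in *. lra. Qed.

Theorem lemma3p2
  (T : R) (HT : 0 < T)
  (Hirr : has_irrationality_measure (2 * PI / T) 2)
  (Z : nat -> R -> R -> R -> R)   (* components Z 0, ..., Z 3 of Z~ *)
  (Hsmooth : forall k, (k < 4)%nat -> smooth3 (Z k))
  (Hper_t : forall k s t x, (k < 4)%nat -> Z k s (t + T) x = Z k s t x)
  (Hper_x : forall k s t x, (k < 4)%nat -> Z k s t (x + 2 * PI) = Z k s t x)
  (Heq : forall i s t x, (i < 4)%nat ->
      pD dS (Z i) s t x
      + sum_f_R0 (fun j => M1 i j * pD dT (Z j) s t x) 3
      + sum_f_R0 (fun j => M2 i j * pD dX (Z j) s t x) 3 = 0)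
  (Henergy : ex_RInt_gen
      (fun s => torus_int T (fun t x =>
                  sum_f_R0 (fun k => (pD dS (Z k) s t x) ^ 2) 3))
      (Rbar_locally m_infty) (Rbar_locally p_infty))
  (Hmean : forall k s, (k < 4)%nat -> torus_int T (fun t x => Z k s t x) = 0) :
  forall k (a b : nat), (k < 4)%nat ->
    forall eps, 0 < eps -> exists S, forall s, S <= s ->
      forall t x, Rabs (Dtx a b (Z k) s t x) < eps.
Proof.
  assert (HS : Sm Z) by exact Hsmooth.
  assert (HE : EqY Z) by exact Heq.
  assert (PZ : forall k, (k < 4)%nat -> Per T (Z k)).
  { intros k Hk s t x. split; auto. }
  pose proof (irrational_of T Hirr) as Irr.
  pose proof PI_RGT_0 as Hpi.
  set (W := fun k => pD dS (Z k)).
  assert (HW : Sm W) by (apply Sm_pD; auto).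
  assert (EW : EqY W) by (apply eq_pD; auto).
  assert (PW : forall k, (k < 4)%nat -> Per T (W k)) by (intros; apply Per_pDS; auto).
  assert (D1F : D1 (Bf W W)) by (apply D1_B; auto).
  assert (D1G : D1 (pD dS (Bf W W))).
  { rewrite (pD_B dS W W HW HW). apply D1_fadd; apply D1_B; auto; apply Sm_pD; auto. }
  assert (Efun : (fun s => torus_int T (fun t x => sum_f_R0 (fun k => (pD dS (Z k) s t x) ^ 2) 3))
                 = (fun s => torus_int T (Bf W W s))).
  { apply functional_extensionality. intros s. f_equal.
    apply functional_extensionality. intros t. apply functional_extensionality. intros x.
    unfold Bf, fadd, fmul, W. simpl. ring. }
  rewrite Efun in Henergy. destruct Henergy as [l Hl].
  assert (F0 : forall s, torus_int T (Bf W W s) = 0).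
  { apply (energy_zero (fun s => torus_int T (Bf W W s)) (fun s => torus_int T (pD dS (Bf W W) s))
                       (fun s => torus_int T (pD dS (pD dS (Bf W W)) s)) l).
    - intros s. destruct D1F as [Hc Hd]. destruct (Hd dS).
      apply torus_derive_s; auto. lra.
    - intros s. destruct D1G as [Hc Hd]. destruct (Hd dS).
      apply torus_derive_s; auto. lra.
    - intros s. apply second_deriv_nonneg; auto.
    - intros s. apply tint_nonneg. lra. apply D1C3; auto.
      intros t x. unfold Bf, fadd, fmul. apply sq_sum_pos.
    - exact Hl. }
  assert (W0box : forall k s t x, (k < 4)%nat -> 0 <= t <= T -> 0 <= x <= 2 * PI -> W k s t x = 0).
  { intros k s t x Hk Ht Hx. apply NNPP. intros Hn.
    assert (0 < torus_int T (Bf W W s)); [|rewrite F0 in H; lra].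
    apply (tint_pos T (Bf W W) s t x); auto.
    - apply D1C3; auto.
    - intros t' x'. unfold Bf, fadd, fmul. apply sq_sum_pos.
    - unfold Bf, fadd, fmul.
      assert (0 < W k s t x * W k s t x).
      { destruct (Rlt_or_le 0 (W k s t x)). nra. destruct H. nra. contradiction. }
      pose proof (Rle_0_sqr (W 0%nat s t x)). pose proof (Rle_0_sqr (W 1%nat s t x)).
      pose proof (Rle_0_sqr (W 2%nat s t x)). pose proof (Rle_0_sqr (W 3%nat s t x)). unfold Rsqr in *.
      destruct k as [|[|[|[|k]]]]; try lia; lra. }
  assert (W0 : forall k s t x, (k < 4)%nat -> W k s t x = 0).
  { intros k s t x Hk.
    destruct (reduce_per (fun t => W k s t x) T HT (fun y => proj1 (PW k Hk s y x)) t) as [t0 [Ht0 E1]].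
    simpl in E1. rewrite E1.
    assert (H2P : 0 < 2 * PI) by lra.
    destruct (reduce_per (fun x => W k s t0 x) (2 * PI) H2P (fun y => proj2 (PW k Hk s t0 y)) x) as [x0 [Hx0 E2]].
    simpl in E2. rewrite E2. apply W0box; auto. }
  assert (LZ0 : forall i s t x, (i < 4)%nat -> LYc Z i s t x = 0).
  { intros i s t x Hi. pose proof (EqY_L Z HE i Hi s t x) as E.
    change (pD dS (Z i) s t x) with (W i s t x) in E. rewrite W0 in E by auto. lra. }
  assert (R0 := LZ0 0%nat). assert (R1 := LZ0 1%nat). assert (R2 := LZ0 2%nat). assert (R3 := LZ0 3%nat).
  unfold LYc in R0, R1, R2, R3. unfold fadd, fsc in R0, R1, R2, R3. cbv beta iota in R0, R1, R2, R3.
  assert (Const : forall (p : R -> R -> R -> R) sg, (sg = 1 \/ sg = -1) -> D1 p ->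
     (forall s t x, pD dT p s t x = - sg * pD dX p s t x) ->
     (forall k, (k < 4)%nat -> Per T (Z k)) ->
     (forall s t x, p s (t + T) x = p s t x) -> (forall s t x, p s t (x + 2 * PI) = p s t x) ->
     forall s t x, p s t x = p s 0 0).
  { intros p sg Hsg Hp Hd _ H1 H2 s. apply (transport3 p s sg T); auto. }
  assert (C03p : forall s t x, fadd (Z 0%nat) (Z 3%nat) s t x = fadd (Z 0%nat) (Z 3%nat) s 0 0).
  { apply (Const _ (-1)); [right; reflexivity | d1 | | exact PZ | |].
    - intros s t x. rewrite (pD_fadd dT) by exd. rewrite (pD_fadd dX) by exd. unfold fadd.
      pose proof (R1 s t x ltac:(lia)). pose proof (R2 s t x ltac:(lia)). lra.
    - intros s t x. unfold fadd. rewrite !Hper_t by lia. reflexivity.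
    - intros s t x. unfold fadd. rewrite !Hper_x by lia. reflexivity. }
  assert (C03m : forall s t x, fadd (Z 0%nat) (fsc (-1) (Z 3%nat)) s t x = fadd (Z 0%nat) (fsc (-1) (Z 3%nat)) s 0 0).
  { apply (Const _ 1); [left; reflexivity | d1 | | exact PZ | |].
    - intros s t x. rewrite (pD_fadd dT) by exd. rewrite (pD_fadd dX) by exd.
      rewrite (pD_fsc dT), (pD_fsc dX). unfold fadd, fsc.
      pose proof (R1 s t x ltac:(lia)). pose proof (R2 s t x ltac:(lia)). lra.
    - intros s t x. unfold fadd, fsc. rewrite !Hper_t by lia. reflexivity.
    - intros s t x. unfold fadd, fsc. rewrite !Hper_x by lia. reflexivity. }
  assert (C12p : forall s t x, fadd (Z 1%nat) (Z 2%nat) s t x = fadd (Z 1%nat) (Z 2%nat) s 0 0).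
  { apply (Const _ (-1)); [right; reflexivity | d1 | | exact PZ | |].
    - intros s t x. rewrite (pD_fadd dT) by exd. rewrite (pD_fadd dX) by exd. unfold fadd.
      pose proof (R0 s t x ltac:(lia)). pose proof (R3 s t x ltac:(lia)). lra.
    - intros s t x. unfold fadd. rewrite !Hper_t by lia. reflexivity.
    - intros s t x. unfold fadd. rewrite !Hper_x by lia. reflexivity. }
  assert (C12m : forall s t x, fadd (Z 1%nat) (fsc (-1) (Z 2%nat)) s t x = fadd (Z 1%nat) (fsc (-1) (Z 2%nat)) s 0 0).
  { apply (Const _ 1); [left; reflexivity | d1 | | exact PZ | |].
    - intros s t x. rewrite (pD_fadd dT) by exd. rewrite (pD_fadd dX) by exd.
      rewrite (pD_fsc dT), (pD_fsc dX). unfold fadd, fsc.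
      pose proof (R0 s t x ltac:(lia)). pose proof (R3 s t x ltac:(lia)). lra.
    - intros s t x. unfold fadd, fsc. rewrite !Hper_t by lia. reflexivity.
    - intros s t x. unfold fadd, fsc. rewrite !Hper_x by lia. reflexivity. }
  unfold fadd, fsc in C03p, C03m, C12p, C12m.
  assert (ZC : forall k s t x, (k < 4)%nat -> Z k s t x = Z k s 0 0).
  { intros k s t x Hk.
    pose proof (C03p s t x). pose proof (C03m s t x). pose proof (C12p s t x). pose proof (C12m s t x).
    destruct k as [|[|[|[|k]]]]; try lia; lra. }
  assert (Z0 : forall k s t x, (k < 4)%nat -> Z k s t x = 0).
  { intros k s t x Hk. rewrite ZC by auto.
    pose proof (Hmean k s Hk) as Hm.
    rewrite (functional_extensionality (fun t x => Z k s t x) (fun _ _ => Z k s 0 0)) in Hm.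
    - rewrite tint_const in Hm.
      assert (0 < 2 * PI * T) by (apply Rmult_lt_0_compat; lra).
      destruct (Req_dec (Z k s 0 0) 0) as [|Hn]; auto. exfalso.
      assert (Z k s 0 0 * (2 * PI) * T <> 0); [|contradiction].
      rewrite Rmult_assoc. apply Rmult_integral_contrapositive. split; lra.
    - intros t'. apply functional_extensionality. intros x'. apply ZC; auto. }
  intros k a b Hk eps Heps. exists 0. intros s _ t x.
  assert (EZ : Z k = (fun _ _ _ => 0)) by (apply funext3; intros; apply Z0; auto).
  unfold Dtx. rewrite EZ, iter_zero, iter_zero. rewrite Rabs_R0. exact Heps.
Qed.
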